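(* For every integer $p\ge0$, $$\sum_{k=1}^\infty\frac{1}{(2k-1)(2k)^p(2k+1)}=\begin{cases}\dfrac12-\displaystyle\sum_{j=1}^{p/2}2^{-2j}\zeta(2j), & p\text{ even},\\[8pt] -\dfrac12+\ln 2-\displaystyle\sum_{j=1}^{(p-1)/2}2^{-(2j+1)}\zeta(2j+1), & p\text{ odd},\end{cases}$$ where empty sums are $0$.
   Context: $\zeta(s)=\sum_{k\ge1}k^{-s}$ denotes the Riemann zeta function. *)

(* Defs.v *)
From Stdlib Require Import Reals.
From Coquelicot Require Import Coquelicot.
Open Scope R_scope.

(* Riemann zeta at an integer s >= 2: zeta(s) = sum_{k>=1} k^{-s}.
   Coquelicot series are indexed from 0, so term n is 1/(n+1)^s. *)
Definition zeta (s : nat) : R := Series (fun n : nat => / (INR (n + 1)) ^ s).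

Definition cor2_term (p k : nat) : R :=
  / ((2 * INR k - 1) * (2 * INR k) ^ p * (2 * INR k + 1)).

Definition cor2_rhs (p : nat) : R :=
  if Nat.even p then
    1 / 2 - sum_n_m (fun j : nat => / 2 ^ (2 * j) * zeta (2 * j)) 1 (Nat.div2 p)
  else
    - (1 / 2) + ln 2
      - sum_n_m (fun j : nat => / 2 ^ (2 * j + 1) * zeta (2 * j + 1)) 1 (Nat.div2 p).

(* Main.v *)
Require Import Defs.
From Stdlib Require Import Reals Lra Lia.
From Coquelicot Require Import Coquelicot.
Open Scope R_scope.

Lemma lim_aux (c k : R) :
  is_lim_seq (fun N : nat => c + k * / (2 * INR N + 3)) c.
Proof.
  assert (E : c = c + k * 0) by ring.
  pattern c at 2; rewrite E.
  apply (is_lim_seq_plus' (fun _ => c) (fun N => k * / (2 * INR N + 3)) c (k * 0)).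
  - apply is_lim_seq_const.
  - apply (is_lim_seq_scal_l (fun N => / (2 * INR N + 3)) k 0).
    replace (Finite 0) with (Rbar_inv p_infty) by reflexivity.
    apply is_lim_seq_inv; [|discriminate].
    apply is_lim_seq_le_p_loc with INR; [|apply is_lim_seq_INR].
    exists O; intros n _. pose proof (pos_INR n). lra.
Qed.

Lemma ln1p_le (y : R) : 0 < 1 + y -> ln (1 + y) <= y.
Proof.
  intros H. destruct (Req_dec y 0) as [->|Hy].
  - rewrite Rplus_0_r, ln_1. lra.
  - rewrite <- (ln_exp y) at 2. apply ln_le; [lra|].
    left; apply exp_ineq1; auto.
Qed.

Lemma ln_step_up (x : R) : 0 < x -> ln (x + 1) - ln x <= / x.
Proof.
  intros Hx. rewrite <- ln_div by lra.
  replace ((x + 1) / x) with (1 + / x) by (field; lra).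
  apply ln1p_le. pose proof (Rinv_0_lt_compat x Hx). lra.
Qed.

Lemma ln_step_down (x : R) : 1 < x -> / x <= ln x - ln (x - 1).
Proof.
  intros Hx. rewrite <- ln_div by lra.
  assert (Hi : 0 < / x < 1).
  { split. apply Rinv_0_lt_compat; lra.
    rewrite <- Rinv_1. apply Rinv_lt_contravar; lra. }
  assert (H := ln1p_le (- / x) ltac:(lra)).
  replace (1 + - / x) with ((x - 1) / x) in H by (field; lra).
  rewrite ln_div in H by lra. rewrite ln_div by lra. lra.
Qed.

Lemma tele_lower (f g : nat -> R) (a b : nat) : (a <= b)%nat ->
  (forall j, (a <= j <= b)%nat -> g (S j) - g j <= f j) ->
  g (S b) - g a <= sum_n_m f a b.
Proof.
  intros Hab H. induction Hab.
  - rewrite sum_n_n. apply H; lia.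
  - rewrite sum_n_Sm by lia. change (plus ?x ?y) with (x + y).
    assert (H1 := H (S m) ltac:(lia)).
    assert (H2 : g (S m) - g a <= sum_n_m f a m) by (apply IHHab; intros; apply H; lia).
    lra.
Qed.

Lemma tele_upper (f g : nat -> R) (a b : nat) : (a <= b)%nat ->
  (forall j, (a <= j <= b)%nat -> f j <= g (S j) - g j) ->
  sum_n_m f a b <= g (S b) - g a.
Proof.
  intros Hab H. induction Hab.
  - rewrite sum_n_n. apply H; lia.
  - rewrite sum_n_Sm by lia. change (plus ?x ?y) with (x + y).
    assert (H1 := H (S m) ltac:(lia)).
    assert (H2 : sum_n_m f a m <= g (S m) - g a) by (apply IHHab; intros; apply H; lia).
    lra.
Qed.

Lemma INR_S1 (n : nat) : INR (n + 1) = INR n + 1.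
Proof. rewrite plus_INR; simpl; ring. Qed.

Lemma base0 : is_series (fun n => cor2_term 0 (n + 1)) (cor2_rhs 0).
Proof.
  assert (HS : forall N, sum_n (fun n => cor2_term 0 (n + 1)) N
                         = 1/2 + (-1/2) * / (2 * INR N + 3)).
  { induction N.
    - rewrite sum_O. unfold cor2_term. simpl. field.
    - rewrite sum_Sn. change (plus ?x ?y) with (x + y). rewrite IHN.
      unfold cor2_term. rewrite INR_S1, S_INR. simpl.
      pose proof (pos_INR N). field. repeat split; lra. }
  unfold cor2_rhs; simpl. rewrite sum_n_m_zero by lia.
  change (is_lim_seq (sum_n (fun n => cor2_term 0 (n + 1))) (1/2 - zero)).
  apply is_lim_seq_ext with (1 := fun N => eq_sym (HS N)).
  replace (1/2 - zero) with (1/2) by (unfold zero; simpl; ring).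
  apply lim_aux.
Qed.

Definition hf (j : nat) : R := / INR j.

Lemma base1_sum N : sum_n (fun n => cor2_term 1 (n + 1)) N
   = sum_n_m hf (N + 2) (2 * N + 2) - 1/2 + / (2 * (2 * INR N + 3)).
Proof.
  induction N.
  - rewrite sum_O. simpl. rewrite sum_n_n. unfold hf, cor2_term. simpl. field.
  - rewrite sum_Sn. change (plus ?x ?y) with (x + y). rewrite IHN.
    replace (2 * S N + 2)%nat with (S (S (2 * N + 2))) by lia.
    replace (S N + 2)%nat with (S (N + 2)) by lia.
    assert (E1 := sum_Sn_m hf (N + 2) (S (S (2 * N + 2))) ltac:(lia)).
    rewrite (sum_n_Sm hf (N + 2) (S (2 * N + 2))) in E1 by lia.
    rewrite (sum_n_Sm hf (N + 2) (2 * N + 2)) in E1 by lia.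
    change (plus ?x ?y) with (x + y) in E1.
    change (plus ?x ?y) with (x + y) in E1.
    change (plus ?x ?y) with (x + y) in E1.
    assert (E2 : sum_n_m hf (S (N + 2)) (S (S (2 * N + 2))) =
      sum_n_m hf (N + 2) (2 * N + 2) + hf (S (2 * N + 2)) + hf (S (S (2 * N + 2))) - hf (N + 2)) by lra.
    rewrite E2.
    unfold hf, cor2_term.
    rewrite !S_INR, !plus_INR, !mult_INR, !S_INR. simpl.
    pose proof (pos_INR N). field. repeat split; lra.
Qed.

Lemma B_bounds N : ln 2 - / (2 * INR N + 3) <= sum_n_m hf (N + 2) (2 * N + 2) <= ln 2.
Proof.
  pose proof (pos_INR N) as HN.
  split.
  - assert (L := tele_lower hf (fun j => ln (INR j)) (N + 2) (2 * N + 2) ltac:(lia)).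
    cbv beta in L.
    assert (L' : ln (INR (S (2 * N + 2))) - ln (INR (N + 2)) <= sum_n_m hf (N + 2) (2 * N + 2)).
    { apply L. intros j Hj. rewrite S_INR. unfold hf. apply ln_step_up.
      apply lt_0_INR; lia. }
    clear L.
    rewrite S_INR, !plus_INR, mult_INR in L'. simpl in L'.
    assert (U := ln_step_up (2 * INR N + 3) ltac:(lra)).
    replace (2 * INR N + 3 + 1) with (2 * (INR N + 2)) in U by ring.
    rewrite ln_mult in U by lra.
    replace ((1 + 1) * INR N + (1 + 1) + 1) with (2 * INR N + 3) in L' by ring.
    replace (1 + 1) with 2 in L' by ring. replace (N + (N + 0) + 2)%nat with (2 * N + 2)%nat in L' by lia. lra.
  - assert (L := tele_upper hf (fun j => ln (INR j - 1)) (N + 2) (2 * N + 2) ltac:(lia)).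
    cbv beta in L.
    assert (L' : sum_n_m hf (N + 2) (2 * N + 2) <= ln (INR (S (2 * N + 2)) - 1) - ln (INR (N + 2) - 1)).
    { apply L. intros j Hj. rewrite S_INR. unfold hf.
      replace (INR j + 1 - 1) with (INR j) by ring. apply ln_step_down.
      apply lt_1_INR; lia. }
    clear L.
    rewrite S_INR, !plus_INR, mult_INR in L'. simpl in L'.
    replace ((1 + 1) * INR N + (1 + 1) + 1 - 1) with (2 * (INR N + 1)) in L' by ring.
    replace (INR N + (1 + 1) - 1) with (INR N + 1) in L' by ring.
    rewrite ln_mult in L' by lra. replace (N + (N + 0) + 2)%nat with (2 * N + 2)%nat in L' by lia. lra.
Qed.

Lemma base1 : is_series (fun n => cor2_term 1 (n + 1)) (cor2_rhs 1).
Proof.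
  unfold cor2_rhs; simpl. rewrite sum_n_m_zero by lia.
  change (is_lim_seq (sum_n (fun n => cor2_term 1 (n + 1))) (- (1/2) + ln 2 - zero)).
  replace (- (1/2) + ln 2 - zero) with (ln 2 - 1/2) by (unfold zero; simpl; ring).
  apply is_lim_seq_le_le with (u := fun N => (ln 2 - 1/2) + (-1/2) * / (2 * INR N + 3))
                              (w := fun N => (ln 2 - 1/2) + (1/2) * / (2 * INR N + 3)).
  2, 3: apply lim_aux.
  intros N. rewrite base1_sum. pose proof (B_bounds N). pose proof (pos_INR N).
  replace (/ (2 * (2 * INR N + 3))) with (1/2 * / (2 * INR N + 3)) by (field; lra).
  lra.
Qed.

Lemma term_rec p n : cor2_term (S (S p)) (n + 1)
  = cor2_term p (n + 1) - / 2 ^ (S (S p)) * / (INR (n + 1)) ^ (S (S p)).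
Proof.
  unfold cor2_term. rewrite INR_S1. pose proof (pos_INR n).
  rewrite <- !Rinv_mult, <- Rpow_mult_distr.
  assert (0 < (2 * (INR n + 1))) by lra.
  assert (0 < (2 * (INR n + 1)) ^ p) by (apply pow_lt; lra).
  simpl. field. repeat split; lra.
Qed.

Lemma term_bound p n : Rabs (cor2_term p (n + 1)) <= cor2_term 0 (n + 1).
Proof.
  unfold cor2_term. rewrite INR_S1. pose proof (pos_INR n).
  assert (1 <= (2 * (INR n + 1)) ^ p) by (apply pow_R1_Rle; lra).
  rewrite Rabs_pos_eq.
  2: { left; apply Rinv_0_lt_compat. apply Rmult_lt_0_compat; [apply Rmult_lt_0_compat|]; lra. }
  apply Rinv_le_contravar.
  - apply Rmult_lt_0_compat; [apply Rmult_lt_0_compat|]; lra.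
  - simpl. rewrite Rmult_1_r.
    apply Rmult_le_compat_r; [lra|]. rewrite <- (Rmult_1_r (2 * (INR n + 1) - 1)) at 1.
    apply Rmult_le_compat_l; lra.
Qed.

Lemma rhs_rec p : cor2_rhs (S (S p)) = cor2_rhs p - / 2 ^ (S (S p)) * zeta (S (S p)).
Proof.
  unfold cor2_rhs. change (Nat.even (S (S p))) with (Nat.even p).
  change (Nat.div2 (S (S p))) with (S (Nat.div2 p)).
  pose proof (Nat.div2_odd p) as Hd. rewrite <- Nat.negb_even in Hd.
  destruct (Nat.even p) eqn:E; simpl negb in Hd; unfold Nat.b2n in Hd;
  rewrite sum_n_Sm by lia; change (plus ?x ?y) with (x + y).
  - replace (2 * S (Nat.div2 p))%nat with (S (S p)) by lia. ring.
  - replace (2 * S (Nat.div2 p) + 1)%nat with (S (S p)) by lia. ring.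
Qed.

Lemma main p : is_series (fun n => cor2_term p (n + 1)) (cor2_rhs p)
            /\ is_series (fun n => cor2_term (S p) (n + 1)) (cor2_rhs (S p)).
Proof.
  induction p as [|p [IH1 IH2]].
  - split; [apply base0 | apply base1].
  - split; [exact IH2|].
    assert (Ex : ex_series (fun n => cor2_term (S (S p)) (n + 1))).
    { apply (@ex_series_le R_AbsRing R_CompleteNormedModule _ (fun n => cor2_term 0 (n + 1))).
      - intros n. apply term_bound.
      - eexists; apply base0. }
    destruct Ex as [s Hs].
    assert (Hd := is_series_minus _ _ _ _ IH1 Hs).
    assert (Hd' : is_series (fun n => / 2 ^ (S (S p)) * / (INR (n + 1)) ^ (S (S p)))
                    (cor2_rhs p - s)).
    { eapply is_series_ext; [|exact Hd]. intros n. cbv beta.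
      change (plus ?x ?y) with (x + y). change (opp ?x) with (- x).
      rewrite term_rec. match goal with |- ?a = ?b => change (@eq R a b) end. ring. }
    apply is_series_unique in Hd'. rewrite Series_scal_l in Hd'.
    fold (zeta (S (S p))) in Hd'.
    rewrite rhs_rec.
    replace (cor2_rhs p - / 2 ^ S (S p) * zeta (S (S p))) with s by lra.
    exact Hs.
Qed.

Theorem corollary2 (p : nat) :
  is_series (fun n : nat => cor2_term p (n + 1)) (cor2_rhs p).
Proof. apply main. Qed.
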